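(* Let $H_0,H_1$ be complex Hilbert spaces, $G$ a densely defined closed operator from $H_0$ into $H_1$ and $D$ a densely defined closed operator from $H_1$ into $H_0$ with $-G^*\subset D$. If $u\in\mathrm{BD}(G)$, then $Gu\in\mathrm{BD}(D)$. If $q\in\mathrm{BD}(D)$, then $Dq\in\mathrm{BD}(G)$.
   Context: $\mathring D=-G^*$, $\mathring G=-D^*$. Domains carry graph inner products, e.g. $(u,v)_{\mathrm{dom}(G)}=(u,v)_{H_0}+(Gu,Gv)_{H_1}$. $\mathrm{BD}(G)$ is the orthogonal complement of $\mathrm{dom}(\mathring G)$ in $\mathrm{dom}(G)$ and $\mathrm{BD}(D)$ the orthogonal complement of $\mathrm{dom}(\mathring D)$ in $\mathrm{dom}(D)$. *)

(* Defs.v *)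
From HB Require Import structures.
From mathcomp Require Import all_boot all_order all_algebra.
From mathcomp Require Import reals.
From mathcomp Require Export complex.
Set Implicit Arguments. Unset Strict Implicit. Unset Printing Implicit Defensive.
Import Order.TTheory GRing.Theory Num.Theory.
Local Open Scope ring_scope.

Section Hilbert.
Variable R : realType.
Local Notation C := (R[i])%C.

Definition inner_product (V : lmodType C) (ip : V -> V -> C) : Prop :=
  [/\ (forall x y z, ip (x + y) z = ip x z + ip y z),
      (forall (a : C) x y, ip (a *: x) y = a * ip x y),
      (forall x y, ip y x = (ip x y)^*),
      (forall x, 0 <= ip x x) &
      (forall x, ip x x = 0 -> x = 0)].

Definition cvg_ip (V : lmodType C) (ip : V -> V -> C) (u : nat -> V) (x : V) : Prop :=
  forall e : C, 0 < e -> exists N, forall n, (N <= n)%N -> ip (u n - x) (u n - x) < e.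

Definition cauchy_ip (V : lmodType C) (ip : V -> V -> C) (u : nat -> V) : Prop :=
  forall e : C, 0 < e -> exists N, forall m n, (N <= m)%N -> (N <= n)%N ->
    ip (u m - u n) (u m - u n) < e.

Definition hilbert (V : lmodType C) (ip : V -> V -> C) : Prop :=
  inner_product ip /\ forall u, cauchy_ip ip u -> exists x, cvg_ip ip u x.

(* An (unbounded) linear operator V -> W is a pair (dom, A): a linear subspace
   dom of V and a map A, linear on dom (values outside dom are irrelevant). *)
Definition lin_op (V W : lmodType C) (dom : V -> Prop) (A : V -> W) : Prop :=
  [/\ dom 0,
      (forall x y, dom x -> dom y -> dom (x + y) /\ A (x + y) = A x + A y) &
      (forall (a : C) x, dom x -> dom (a *: x) /\ A (a *: x) = a *: A x)].

Definition densely_defined (V : lmodType C) (ip : V -> V -> C) (dom : V -> Prop) : Prop :=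
  forall x, exists u : nat -> V, (forall n, dom (u n)) /\ cvg_ip ip u x.

Definition closed_op (V W : lmodType C) (ipV : V -> V -> C) (ipW : W -> W -> C)
    (dom : V -> Prop) (A : V -> W) : Prop :=
  forall (u : nat -> V) x y, (forall n, dom (u n)) -> cvg_ip ipV u x ->
    cvg_ip ipW (fun n => A (u n)) y -> dom x /\ A x = y.

Definition adj_val (V W : lmodType C) (ipV : V -> V -> C) (ipW : W -> W -> C)
    (dom : V -> Prop) (A : V -> W) (y : W) (z : V) : Prop :=
  forall x, dom x -> ipW (A x) y = ipV x z.

Definition adj_dom (V W : lmodType C) (ipV : V -> V -> C) (ipW : W -> W -> C)
    (dom : V -> Prop) (A : V -> W) (y : W) : Prop :=
  exists z, adj_val ipV ipW dom A y z.

Definition neg_adj_sub (V W : lmodType C) (ipV : V -> V -> C) (ipW : W -> W -> C)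
    (dom : V -> Prop) (A : V -> W) (domB : W -> Prop) (B : W -> V) : Prop :=
  forall y z, adj_val ipV ipW dom A y z -> domB y /\ B y = - z.

(* BD(A): orthogonal complement in dom(A) (graph inner product) of
   dom(ring A) = dom(-B^* ) = dom(B^* ), where (domB, B) : W -> V. *)
Definition BD (V W : lmodType C) (ipV : V -> V -> C) (ipW : W -> W -> C)
    (dom : V -> Prop) (A : V -> W) (domB : W -> Prop) (B : W -> V) (u : V) : Prop :=
  dom u /\ forall v, adj_dom ipW ipV domB B v -> ipV u v + ipW (A u) (A v) = 0.

End Hilbert.

(* Main.v *)
Require Import Defs.
From HB Require Import structures.
From mathcomp Require Import all_boot all_order all_algebra.
From mathcomp Require Import reals complex ring lra.
Import Order.TTheory GRing.Theory Num.Theory.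
Local Open Scope ring_scope.
From mathcomp Require Import boolp classical_sets.
Set Implicit Arguments.
Unset Strict Implicit.

Section Basic.
Variable R : realType.
Local Notation C := (R[i])%C.

Lemma ReD (x y : C) : complex.Re (x + y) = complex.Re x + complex.Re y.
Proof. by case: x => a b; case: y. Qed.
Lemma ImD (x y : C) : complex.Im (x + y) = complex.Im x + complex.Im y.
Proof. by case: x => a b; case: y. Qed.
Lemma ReN (x : C) : complex.Re (- x) = - complex.Re x.
Proof. by case: x. Qed.
Lemma ReMr (r : R) (z : C) : complex.Re (r%:C%C * z) = r * complex.Re z.
Proof. by case: z => a b /=; rewrite mul0r subr0. Qed.
Lemma ReJ (z : C) : complex.Re (Num.conj z) = complex.Re z.
Proof. by case: z. Qed.
Lemma ReMiJ (z : C) : complex.Re (Num.conj 'i%C * z) = complex.Im z.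
Proof. case: z => a b /=; lra. Qed.
Lemma c_eq0 (z : C) : complex.Re z = 0 -> complex.Im z = 0 -> z = 0.
Proof. by case: z => a b /= -> ->. Qed.
Lemma ltcP (v e : C) : complex.Im v = 0 -> 0 < e -> (v < e) = (complex.Re v < complex.Re e).
Proof. move=> hv; rewrite !ltcE /= hv => /andP[/eqP-> _]; by rewrite eqxx. Qed.
Lemma ltcP' (v : C) (e : R) : complex.Im v = 0 -> (v < e%:C%C) = (complex.Re v < e).
Proof. move=> hv; rewrite ltcE /= hv; by rewrite eqxx. Qed.
Lemma gtc0 (e : C) : 0 < e -> 0 < complex.Re e.
Proof. by rewrite ltcE => /andP[]. Qed.

Variable V : lmodType C.
Variable ip : V -> V -> C.
Hypothesis Hip : inner_product ip.

Lemma ipDl x y z : ip (x + y) z = ip x z + ip y z. Proof. by case: Hip. Qed.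
Lemma ipZl a x y : ip (a *: x) y = a * ip x y. Proof. by case: Hip. Qed.
Lemma ipC x y : ip y x = Num.conj (ip x y). Proof. by case: Hip. Qed.
Lemma ip_ge0 x : 0 <= ip x x. Proof. by case: Hip. Qed.
Lemma ip_eq0 x : ip x x = 0 -> x = 0. Proof. by case: Hip => _ _ _ _; apply. Qed.
Lemma ipDr x y z : ip x (y + z) = ip x y + ip x z.
Proof. by rewrite ipC ipDl rmorphD /= -!ipC. Qed.
Lemma ipZr a x y : ip x (a *: y) = Num.conj a * ip x y.
Proof. by rewrite ipC ipZl rmorphM /= -ipC. Qed.
Lemma ipNl x y : ip (- x) y = - ip x y.
Proof. by rewrite -scaleN1r ipZl mulN1r. Qed.
Lemma ipNr x y : ip x (- y) = - ip x y.
Proof. by rewrite -scaleN1r ipZr rmorphN rmorph1 mulN1r. Qed.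
Lemma ipBl x y z : ip (x - y) z = ip x z - ip y z.
Proof. by rewrite ipDl ipNl. Qed.
Lemma ipBr x y z : ip x (y - z) = ip x y - ip x z.
Proof. by rewrite ipDr ipNr. Qed.
Lemma ip0l y : ip 0 y = 0.
Proof. by rewrite -(scale0r (0:V)) ipZl mul0r. Qed.
Lemma ipIm x : complex.Im (ip x x) = 0.
Proof. exact: ger0_Im (ip_ge0 x). Qed.

Definition N x := complex.Re (ip x x).
Definition B x y := complex.Re (ip x y).

Lemma N_ge0 x : 0 <= N x.
Proof. by have := ip_ge0 x; rewrite lecE /= => /andP[]. Qed.
Lemma N_eq0 x : N x = 0 -> x = 0.
Proof. by move=> h; apply: ip_eq0; apply: c_eq0 => //; exact: ipIm. Qed.
Lemma ipN x : ip x x = (N x)%:C%C.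
Proof. by rewrite /N; move: (ipIm x); case: (ip x x) => a b /= ->. Qed.
Lemma BC x y : B x y = B y x.
Proof. by rewrite /B ipC ReJ. Qed.
Lemma BDl x y z : B (x + y) z = B x z + B y z.
Proof. by rewrite /B ipDl ReD. Qed.
Lemma BNl x y : B (- x) y = - B x y.
Proof. by rewrite /B ipNl ReN. Qed.
Lemma BZl (r : R) x y : B (r%:C%C *: x) y = r * B x y.
Proof. by rewrite /B ipZl ReMr. Qed.
Lemma BDr x y z : B x (y + z) = B x y + B x z.
Proof. by rewrite BC BDl !(BC _ x). Qed.
Lemma BNr x y : B x (- y) = - B x y.
Proof. by rewrite BC BNl BC. Qed.
Lemma BZr (r : R) x y : B x (r%:C%C *: y) = r * B x y.
Proof. by rewrite BC BZl BC. Qed.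
Lemma ND x y : N (x + y) = N x + N y + 2 * B x y.
Proof. rewrite /N -!/(B _ _) BDl !BDr (BC y x); lra. Qed.
Lemma NN x : N (- x) = N x.
Proof. by rewrite /N -!/(B _ _) BNl BNr opprK. Qed.
Lemma NB x y : N (x - y) = N x + N y - 2 * B x y.
Proof. rewrite ND NN BNr; lra. Qed.
Lemma NZ (r : R) x : N (r%:C%C *: x) = r ^+ 2 * N x.
Proof. by rewrite /N -!/(B _ _) BZl BZr mulrA expr2. Qed.
Lemma B_le (s : R) x y : 0 < s -> 2 * B x y <= s * N x + s^-1 * N y.
Proof.
move=> s0; have := N_ge0 (s%:C%C *: x - y); rewrite NB NZ BZl => h.
rewrite -(ler_pM2l s0) mulrDr (mulrA s s^-1) mulfV ?gt_eqF // mul1r.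
rewrite expr2 in h; nra.
Qed.
End Basic.

Lemma c_half (R : realType) : (((2^-1:R)%:C)%C * (1 + 1) : R[i]) = 1.
Proof. apply/eqP; rewrite eq_complex /= !mul0r !addr0 subr0 mulr0 eqxx andbT.
by rewrite -[1 + 1 : R]/(2%:R) mulVf ?pnatr_eq0. Qed.
Definition eps (R : realType) (n : nat) : R := (n.+1%:R)^-1.
Lemma archi (R : realType) (e : R) : 0 < e -> exists K : nat, eps R K < e.
Proof.
move=> e0; rewrite /eps; exists (Num.truncn e^-1).
have ie : 0 <= e^-1 by rewrite invr_ge0 ltW.
have /andP[_ h] := truncn_itv ie.
rewrite -[X in _ < X]invrK ltf_pV2 ?posrE ?ltr0Sn ?invr_gt0 //.
Qed.
Lemma inv_le (R : realType) (K n : nat) : (K <= n)%N -> eps R n <= eps R K.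
Proof. by move=> h; rewrite /eps; rewrite lef_pV2 ?posrE ?ltr0Sn // ler_nat ltnS. Qed.
Lemma inv_gt0 (R : realType) (n : nat) : 0 < eps R n.
Proof. by rewrite /eps invr_gt0 ltr0Sn. Qed.
Lemma le_eps (R : realType) (X Y c : R) : 0 <= c ->
  (forall e, 0 < e -> X <= Y + c * e) -> X <= Y.
Proof.
move=> c0 h; rewrite leNgt; apply/negP => XY.
have c1 : 0 < c + 1 by lra.
have e0 : 0 < (X - Y) / (c + 1) by rewrite divr_gt0 // subr_gt0.
have := h _ e0.
have : c * ((X - Y) / (c + 1)) < X - Y.
  by rewrite mulrA ltr_pdivrMr //; nra.
lra.
Qed.

Lemma half_v (R : realType) (V : lmodType (R[i])%C) (v : V) :
  ((2^-1:R)%:C)%C *: (v + v) = v.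
Proof. by rewrite -{1 2}(scale1r v) -scalerDl scalerA c_half scale1r. Qed.

Lemma half_sub (R : realType) (V : lmodType (R[i])%C) (x a b : V) :
  x - ((2^-1:R)%:C)%C *: (a + b) = ((2^-1:R)%:C)%C *: ((x - a) + (x - b)).
Proof.
by rewrite -{1}(half_v x) -scalerBr opprD addrACA.
Qed.

Lemma par (R : realType) (V : lmodType (R[i])%C) (ip : V -> V -> (R[i])%C)
  (Hip : inner_product ip) (p q : V) :
  N ip (p - q) = 2 * N ip p + 2 * N ip q - 4 * N ip (((2^-1:R)%:C)%C *: (p + q)).
Proof.
rewrite (NB Hip) (NZ Hip) (ND Hip).
have h : 4 * (2^-1 : R) ^+ 2 = 1.
  by field.
rewrite mulrA h mul1r; lra.
Qed.

Lemma cvgR (R : realType) (V : lmodType (R[i])%C) (ip : V -> V -> (R[i])%C)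
  (Hip : inner_product ip) u z : cvg_ip ip u z ->
  forall e : R, 0 < e -> exists K, forall n, (K <= n)%N -> N ip (u n - z) < e.
Proof.
move=> h e e0; have [|K hK] := h e%:C%C; first by rewrite ltcR.
by exists K => n /hK; rewrite (ipN Hip) ltcR.
Qed.

Lemma cauchyR (R : realType) (V : lmodType (R[i])%C) (ip : V -> V -> (R[i])%C)
  (Hip : inner_product ip) u :
  (forall e : R, 0 < e -> exists K, forall m n, (K <= m)%N -> (K <= n)%N -> N ip (u m - u n) < e) ->
  cauchy_ip ip u.
Proof.
move=> h e e0; have [K hK] := h _ (gtc0 e0).
by exists K => m n hm hn; rewrite (ipN Hip) ltcP //; apply: hK.
Qed.

Section Core.
Variable R : realType.
Local Notation C := (R[i])%C.
Variables (V W : lmodType C) (ipV : V -> V -> C) (ipW : W -> W -> C).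
Hypotheses (HV : hilbert ipV) (HW : hilbert ipW).
Variables (dom : V -> Prop) (A : V -> W).
Hypotheses (HA : lin_op dom A) (Hcl : closed_op ipV ipW dom A).
Let iV := HV.1.
Let iW := HW.1.
Local Notation NV := (N ipV).
Local Notation NW := (N ipW).
Local Notation BV := (B ipV).
Local Notation BW := (B ipW).

Lemma dom0 : dom 0. Proof. by case: HA. Qed.
Lemma dom_add a b : dom a -> dom b -> dom (a + b) /\ A (a + b) = A a + A b.
Proof. by case: HA => _ h _; apply: h. Qed.
Lemma dom_scale k a : dom a -> dom (k *: a) /\ A (k *: a) = k *: A a.
Proof. by case: HA => _ _ h; apply: h. Qed.
Lemma dom_sub a b : dom a -> dom b -> dom (a - b) /\ A (a - b) = A a - A b.
Proof.
move=> ha hb; have [h1 h2] := dom_scale (-1) hb; rewrite scaleN1r in h1 h2.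
by have [h3 h4] := dom_add ha h1; rewrite h4 h2 scaleN1r.
Qed.

Variables (x : V) (y : W).
Definition F a := NV (x - a) + NW (y - A a).
Lemma F_ge0 a : 0 <= F a.
Proof. by rewrite /F addr_ge0 // N_ge0. Qed.

Lemma Fmid a b : dom a -> dom b -> exists m, dom m /\
  NV (a - b) + NW (A a - A b) = 2 * F a + 2 * F b - 4 * F m.
Proof.
move=> ha hb; have [hab Aab] := dom_add ha hb.
have [hm Am] := dom_scale ((2^-1:R)%:C)%C hab.
exists (((2^-1:R)%:C)%C *: (a + b)); split => //.
rewrite /F Am Aab !half_sub.
have e1 : a - b = (x - b) - (x - a) by rewrite opprB [RHS]addrC addrA subrK.
have e2 : A a - A b = (y - A b) - (y - A a) by rewrite opprB [RHS]addrC addrA subrK.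
rewrite e1 e2 (par iV) (par iW) (addrC (x - b)) (addrC (y - A b)); lra.
Qed.

Lemma inf_ex : exists d, 0 <= d /\ (forall a, dom a -> d <= F a) /\
  (forall e, 0 < e -> exists a, dom a /\ F a < d + e).
Proof.
pose S : set R := fun r => exists a, dom a /\ r = F a.
have hS : has_inf S.
  split; first by exists (F 0); exists 0; split => //; exact: dom0.
  by exists 0 => r [a [_ ->]]; exact: F_ge0.
exists (inf S); split.
  by apply: lb_le_inf; [exact: hS.1 | move=> r [a [_ ->]]; exact: F_ge0].
split.
  by move=> a ha; apply: (ge_inf hS.2); exists a.
by move=> e e0; have [r [a [ha ->]] hr] := inf_adherent e0 hS; exists a.
Qed.

Lemma proj : exists a0, dom a0 /\
  forall b, dom b -> BV (x - a0) b + BW (y - A a0) (A b) = 0.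
Proof.
have [d [d0 [dlow dadh]]] := inf_ex.
have [a ha] := choice (fun n => dadh _ (inv_gt0 R n)).
have key : forall m n, NV (a m - a n) + NW (A (a m) - A (a n)) <=
    2 * eps R m + 2 * eps R n.
  move=> m n; have [hm Fm] := ha m; have [hn Fn] := ha n.
  have [c [hc ->]] := Fmid hm hn; have := dlow _ hc; lra.
have cauchy_gen : forall e : R, 0 < e -> exists K, forall m n, (K <= m)%N -> (K <= n)%N ->
    NV (a m - a n) + NW (A (a m) - A (a n)) < e.
  move=> e e0; have e4 : 0 < e / 4 by rewrite divr_gt0.
  have [K hK] := archi e4.
  exists K => m n hm hn; apply: le_lt_trans (key m n) _.
  have := inv_le R hm; have := inv_le R hn; lra.
have ca : cauchy_ip ipV a.
  apply: (cauchyR iV) => e /cauchy_gen [K hK]; exists K => m n hm hn.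
  have := hK _ _ hm hn; have := N_ge0 iW (A (a m) - A (a n)); lra.
have cA : cauchy_ip ipW (fun n => A (a n)).
  apply: (cauchyR iW) => e /cauchy_gen [K hK]; exists K => m n hm hn.
  have := hK _ _ hm hn; have := N_ge0 iV (a m - a n); lra.
have [a0 la0] := HV.2 _ ca.
have [b0 lb0] := HW.2 _ cA.
have [ha0 Aa0] := Hcl (fun n => (ha n).1) la0 lb0.
subst b0.
have la0R := cvgR iV la0; have lb0R := cvgR iW lb0.
have Fa0 : F a0 <= d.
  apply: (le_eps (c := d)); first exact: d0.
  move=> s s0.
  apply: (le_eps (c := (1 + s) + (1 + s^-1))).
    have si0 : 0 < s^-1 by rewrite invr_gt0.
    lra.
  move=> e e0.
  have [K1 hK1] := archi e0.
  have [K2 hK2] := la0R (e / 2) (divr_gt0 e0 (ltr0Sn _ 1)).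
  have [K3 hK3] := lb0R (e / 2) (divr_gt0 e0 (ltr0Sn _ 1)).
  pose n := maxn K1 (maxn K2 K3).
  have n1 : (K1 <= n)%N by rewrite leq_maxl.
  have n2 : (K2 <= n)%N by rewrite /n (leq_trans (leq_maxl K2 K3)) // leq_maxr.
  have n3 : (K3 <= n)%N by rewrite /n (leq_trans (leq_maxr K2 K3)) // leq_maxr.
  have h2 := hK2 _ n2; have h3 := hK3 _ n3.
  have h1 := inv_le R n1.
  have [_ Fn] := ha n.
  have ex : x - a0 = (x - a n) + (a n - a0) by rewrite addrA subrK.
  have ey : y - A a0 = (y - A (a n)) + (A (a n) - A a0) by rewrite addrA subrK.
  have hx := B_le iV (x - a n) (a n - a0) s0.
  have hy := B_le iW (y - A (a n)) (A (a n) - A a0) s0.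
  have hFa0 : F a0 = NV (x - a n) + NV (a n - a0) + 2 * BV (x - a n) (a n - a0)
      + (NW (y - A (a n)) + NW (A (a n) - A a0) + 2 * BW (y - A (a n)) (A (a n) - A a0)).
    by rewrite /F {1}ex {1}ey (ND iV) (ND iW).
  have si : 0 < s^-1 by rewrite invr_gt0.
  have hF : F (a n) < d + e by lra.
  have m1 : (1 + s) * F (a n) <= (1 + s) * (d + e) by rewrite ler_wpM2l ?ltW //; lra.
  have m2 : (1 + s^-1) * (NV (a n - a0) + NW (A (a n) - A a0)) <= (1 + s^-1) * e.
    by rewrite ler_wpM2l ?ltW //; lra.
  move: m1 m2; rewrite /F in hF hFa0 * => m1 m2.
  lra.
exists a0; split => // b hb.
set c := BV (x - a0) b + BW (y - A a0) (A b).
set g := NV b + NW (A b).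
have var : forall t : R, 2 * t * c <= t * (t * g).
  move=> t; have [hb' Ab'] := dom_scale (t%:C)%C hb.
  have [hs As] := dom_add ha0 hb'.
  have := dlow _ hs; rewrite /F As Ab' !opprD !addrA (NB iV) (NB iW) (NZ iV) (NZ iW)
    (BZr iV) (BZr iW).
  move: Fa0; rewrite /F /c /g expr2; lra.
have g0 : 0 <= g by rewrite /g addr_ge0 // N_ge0.
have c1 : 2 * c <= 0.
  apply: (le_eps g0) => t t0; have h := var t.
  rewrite add0r mulrC -(ler_pM2l t0); lra.
have c2 : - (2 * c) <= 0.
  apply: (le_eps g0) => t t0; have h := var (- t).
  rewrite add0r mulrC -(ler_pM2l t0); lra.
lra.
Qed.

Lemma core : (forall w z, adj_val ipV ipW dom A w z -> ipV z x = ipW w y) ->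
  dom x /\ A x = y.
Proof.
move=> H.
have [a0 [ha0 orth]] := proj.
set p := x - a0; set r := y - A a0.
have orthC : forall b, dom b -> ipV p b + ipW r (A b) = 0.
  move=> b hb; apply: c_eq0; first by rewrite ReD; exact: orth.
  have [hib Aib] := dom_scale 'i%C hb.
  by have := orth _ hib; rewrite Aib /B (ipZr iV) (ipZr iW) -ReD -mulrDr ReMiJ.
have adj : adj_val ipV ipW dom A r (- p).
  move=> b hb; have /eqP := orthC b hb; rewrite addr_eq0 => /eqP e.
  by rewrite (ipNr iV) (ipC iW) (ipC iV p b) e rmorphN /= opprK.
have e1 := H _ _ adj.
rewrite (ipNl iV) in e1.
have e2 : ipW r (A a0) = - ipV p a0.
  by apply/eqP; rewrite -addr_eq0 addrC orthC.
have hpp : ipV p p + ipW r r = 0.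
  have -> : ipV p p = ipV p x - ipV p a0 by rewrite -(ipBr iV).
  have -> : ipW r r = ipW r y - ipW r (A a0) by rewrite -(ipBr iW).
  rewrite -e1 e2; ring.
have := congr1 (@complex.Re R) hpp; rewrite ReD => h.
have h' : NV p + NW r = 0 := h.
have np : NV p = 0 by have := N_ge0 iV p; have := N_ge0 iW r; lra.
have nr : NW r = 0 by have := N_ge0 iV p; have := N_ge0 iW r; lra.
have /subr0_eq xa := N_eq0 iV np.
have /subr0_eq yA := N_eq0 iW nr.
by rewrite xa yA.
Qed.

End Core.

Unset Implicit Arguments.
Set Strict Implicit.

Theorem corollary2p6 (R : realType)
  (H0 H1 : lmodType (R[i])%C)
  (ip0 : H0 -> H0 -> (R[i])%C) (ip1 : H1 -> H1 -> (R[i])%C)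
  (domG : H0 -> Prop) (G : H0 -> H1) (domD : H1 -> Prop) (D : H1 -> H0) :
  hilbert ip0 -> hilbert ip1 ->
  lin_op domG G -> densely_defined ip0 domG -> closed_op ip0 ip1 domG G ->
  lin_op domD D -> densely_defined ip1 domD -> closed_op ip1 ip0 domD D ->
  neg_adj_sub ip0 ip1 domG G domD D ->
  (forall u, BD ip0 ip1 domG G domD D u -> BD ip1 ip0 domD D domG G (G u)) /\
  (forall q, BD ip1 ip0 domD D domG G q -> BD ip0 ip1 domG G domD D (D q)).
Proof.
move=> HV HW HG _ HGc HD _ HDc Hsub.
have i0 := HV.1; have i1 := HW.1.
have L1 : forall v z, adj_val ip1 ip0 domD D v z -> domG v /\ G v = - z.
  move=> v z hv; apply: (core HV HW HG HGc) => w z' hw.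
  have [hdw Dw] := Hsub _ _ hw.
  have := hv _ hdw; rewrite Dw (ipNl i0) => e.
  by rewrite (ipNr i1) -e opprK.
split.
- move=> u [hu Hu].
  have [hdGu DGu] : domD (G u) /\ D (G u) = u.
    apply: (core HW HV HD HDc) => w z hw.
    have [_ Gw] := L1 _ _ hw.
    have := Hu w (ex_intro _ z hw); rewrite Gw (ipNr i1) => /subr0_eq e.
    by rewrite (ipC i1 (G u) z) -e -(ipC i0).
  split => // w [z hw].
  have [_ Dw] := Hsub _ _ hw.
  by rewrite DGu Dw (ipNr i0) (hw u hu) subrr.
- move=> q [hq Hq].
  have [hdDq GDq] : domG (D q) /\ G (D q) = q.
    apply: (core HV HW HG HGc) => w z hw.
    have [_ Dw] := Hsub _ _ hw.
    have := Hq w (ex_intro _ z hw); rewrite Dw (ipNr i0) => /subr0_eq e.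
    by rewrite (ipC i0 (D q) z) -e -(ipC i1).
  split => // v [z hv].
  have [_ Gv] := L1 _ _ hv.
  by rewrite GDq Gv (ipNr i1) (hv q hq) subrr.
Qed.
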